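(* Let $\mathcal{D}$ be a set equipped with a finite (nonnegative) measure $\mu$, and let $f,g:\mathcal{D}\to\mathbb{R}$ be bounded measurable functions. Let $\lambda$ denote the product of $\mu$ with Lebesgue measure on $\mathbb{R}$, a measure on $\mathcal{D}\times\mathbb{R}$. For a bounded measurable $h:\mathcal{D}\to\mathbb{R}$ put $$A_h=\{(x,y)\in\mathcal{D}\times\mathbb{R} : 0\le y\le h(x)\}\ \cup\ \{(x,y)\in\mathcal{D}\times\mathbb{R} : h(x)\le y<0\}.$$ Then the intersection kernel satisfies $$\kappa_{\cap}(f,g):=\lambda(A_f\cap A_g)=\tfrac12\big(\|f\|_{1_\mu}+\|g\|_{1_\mu}-\|f-g\|_{1_\mu}\big)=\int_{\{x:\min(f(x),g(x))\ge 0\}}\min(f(x),g(x))\,d\mu(x)-\int_{\{x:\max(f(x),g(x))<0\}}\max(f(x),g(x))\,d\mu(x),$$ and, provided $\lambda(A_f\cup A_g)\neq 0$, the Tanimoto kernel satisfies $$\kappa_{tanimoto}(f,g):=\frac{\lambda(A_f\cap A_g)}{\lambda(A_f\cup A_g)}=\frac{\tfrac12\big(\|f\|_{1_\mu}+\|g\|_{1_\mu}-\|f-g\|_{1_\mu}\big)}{\tfrac12\big(\|f\|_{1_\mu}+\|g\|_{1_\mu}+\|f-g\|_{1_\mu}\big)} =\frac{\int_{\{\min(f,g)\ge 0\}}\min(f,g)\,d\mu-\int_{\{\max(f,g)<0\}}\max(f,g)\,d\mu}{\int_{\{\max(f,g)\ge 0\}}\max(f,g)\,d\mu-\int_{\{\min(f,g)<0\}}\min(f,g)\,d\mu},$$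 where $\min(f,g)$ and $\max(f,g)$ denote pointwise minimum and maximum.
   Context: For a measurable $h:\mathcal{D}\to\mathbb{R}$, $\|h\|_{1_\mu}=\int_{\mathcal{D}}|h(x)|\,d\mu(x)$. The set $A_h$ is the region between the graph of $h$ and the $x$-axis: the part above the axis where $h\ge0$ and the part below the axis where $h<0$. *)

(* Defs.v *)
From HB Require Import structures.
From mathcomp Require Import all_boot all_order all_algebra.
From mathcomp Require Import all_classical all_reals all_analysis.
Set Implicit Arguments. Unset Strict Implicit. Unset Printing Implicit Defensive.
Import Order.TTheory GRing.Theory Num.Theory.
Local Open Scope classical_set_scope.
Local Open Scope ring_scope.

Definition region (D : Type) (R : realType) (h : D -> R) : set (D * R) :=
  [set p | 0 <= p.2 <= h p.1] `|` [set p | h p.1 <= p.2 < 0].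

Definition L1norm d (D : measurableType d) (R : realType)
  (mu : set D -> \bar R) (h : D -> R) : \bar R :=
  (\int[mu]_(x in [set: D]) (`|h x|)%:E)%E.

(* Main.v *)
From HB Require Import structures.
From mathcomp Require Import all_boot all_order all_algebra.
From mathcomp Require Import all_classical all_reals all_analysis.
From mathcomp Require Import lra measurable_realfun.
Require Import Defs.
Import Order.TTheory GRing.Theory Num.Theory.
Local Open Scope classical_set_scope.
Local Open Scope ring_scope.

Lemma bint d (D : measurableType d) (R : realType)
  (mu : {finite_measure set D -> \bar R}) (h : D -> R) (M : R) :
  measurable_fun setT h -> (forall x, `|h x| <= M) ->
  mu.-integrable setT (EFin \o h).
Proof.
move=> mh hM.
apply: (@le_integrable _ _ _ mu setT measurableT _ (EFin \o cst M)) => //.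
- exact/measurable_EFinP.
- move=> x _ /=; rewrite lee_fin.
  exact: le_trans (hM x) (ler_norm M).
- exact: finite_measure_integrable_cst.
Qed.

Lemma bnd (R : realType) (a b A B : R) : `|a| <= A -> `|b| <= B ->
  [/\ `|a - b| <= A + B, `|Num.max (Num.min a b) 0| <= A + B,
      `|Num.min (Num.max a b) 0| <= A + B, `|Num.max (Num.max a b) 0| <= A + B
    & `|Num.min (Num.min a b) 0| <= A + B].
Proof.
rewrite !ler_norml => /andP[? ?] /andP[? ?].
have [?|?] := leP a b; have [?|?] := leP 0 a; have [?|?] := leP 0 b; split; apply/andP; split; lra.
Qed.
Arguments bnd {R a b A B}.
Lemma c1E (R : realType) (a b : R) : Num.max (Num.min a b) 0 = if 0 <= Num.min a b then Num.min a b else 0.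
Proof. by have [h|h] := leP 0 (Num.min a b). Qed.
Lemma c2E (R : realType) (a b : R) : Num.min (Num.max a b) 0 = if Num.max a b < 0 then Num.max a b else 0.
Proof. by have [h|h] := leP 0 (Num.max a b). Qed.
Lemma u1E (R : realType) (a b : R) : Num.max (Num.max a b) 0 = if 0 <= Num.max a b then Num.max a b else 0.
Proof. by have [h|h] := leP 0 (Num.max a b). Qed.
Lemma u2E (R : realType) (a b : R) : Num.min (Num.min a b) 0 = if Num.min a b < 0 then Num.min a b else 0.
Proof. by have [h|h] := leP 0 (Num.min a b). Qed.

Section S.
Variable R : realType.

Ltac fwd := move=> [[/andP[? ?]|/andP[? ?]] [/andP[? ?]|/andP[? ?]]];
  try (apply/andP; split); lra.
Ltac fwd' := move=> [[/andP[? ?]|/andP[? ?]]|[/andP[? ?]|/andP[? ?]]];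
  try (apply/andP; split); lra.
Ltac bwd := move=> /andP[? ?]; split;
  first [left; apply/andP; split; lra | right; apply/andP; split; lra].
Ltac bwd' := move=> /andP[? ?]; have [?|?] := leP 0 y;
  first [left; left; apply/andP; split; lra | left; right; apply/andP; split; lra
        | right; left; apply/andP; split; lra | right; right; apply/andP; split; lra].
Ltac mcase := repeat (case: leP => ?); lra.

Lemma cap_meas (a b : R) :
  lebesgue_measure [set y : R | (0 <= y <= a \/ a <= y < 0) /\ (0 <= y <= b \/ b <= y < 0)] =
  (Num.max (Num.min a b) 0 - Num.min (Num.max a b) 0)%:E.
Proof.
have [ab|ab] := leP a b.
- have [a0|a0] := leP 0 a.
    rewrite (_ : [set y | _] = [set` `[0, a]]).
    { rewrite lebesgue_measure_itv /= lte_fin.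
      case: ltP => ?; rewrite -?EFinD; apply: (congr1 EFin); mcase. }
    apply/seteqP; split => y; rewrite /= in_itv /=; [fwd|bwd].
  have [b0|b0] := leP 0 b.
    rewrite (_ : [set y | _] = set0).
    { rewrite measure0; apply: (congr1 EFin); mcase. }
    apply/seteqP; split => y //=; fwd.
  rewrite (_ : [set y | _] = [set` `[b, 0[]).
  { rewrite lebesgue_measure_itv /= lte_fin.
    case: ltP => ?; rewrite -?EFinD; apply: (congr1 EFin); mcase. }
  apply/seteqP; split => y; rewrite /= in_itv /=; [fwd|bwd].
- have [b0|b0] := leP 0 b.
    rewrite (_ : [set y | _] = [set` `[0, b]]).
    { rewrite lebesgue_measure_itv /= lte_fin.
      case: ltP => ?; rewrite -?EFinD; apply: (congr1 EFin); mcase. }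
    apply/seteqP; split => y; rewrite /= in_itv /=; [fwd|bwd].
  have [a0|a0] := leP 0 a.
    rewrite (_ : [set y | _] = set0).
    { rewrite measure0; apply: (congr1 EFin); mcase. }
    apply/seteqP; split => y //=; fwd.
  rewrite (_ : [set y | _] = [set` `[a, 0[]).
  { rewrite lebesgue_measure_itv /= lte_fin.
    case: ltP => ?; rewrite -?EFinD; apply: (congr1 EFin); mcase. }
  apply/seteqP; split => y; rewrite /= in_itv /=; [fwd|bwd].
Qed.

Lemma cup_meas (a b : R) :
  lebesgue_measure [set y : R | (0 <= y <= a \/ a <= y < 0) \/ (0 <= y <= b \/ b <= y < 0)] =
  (Num.max (Num.max a b) 0 - Num.min (Num.min a b) 0)%:E.
Proof.
have [ab|ab] := leP a b.
- have [a0|a0] := leP 0 a.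
    rewrite (_ : [set y | _] = [set` `[0, b]]).
    { rewrite lebesgue_measure_itv /= lte_fin.
      case: ltP => ?; rewrite -?EFinD; apply: (congr1 EFin); mcase. }
    apply/seteqP; split => y; rewrite /= in_itv /=; [fwd'|bwd'].
  have [b0|b0] := leP 0 b.
    rewrite (_ : [set y | _] = [set` `[a, b]]).
    { rewrite lebesgue_measure_itv /= lte_fin.
      case: ltP => ?; rewrite -?EFinD; apply: (congr1 EFin); mcase. }
    apply/seteqP; split => y; rewrite /= in_itv /=; [fwd'|bwd'].
  rewrite (_ : [set y | _] = [set` `[a, 0[]).
  { rewrite lebesgue_measure_itv /= lte_fin.
    case: ltP => ?; rewrite -?EFinD; apply: (congr1 EFin); mcase. }
  apply/seteqP; split => y; rewrite /= in_itv /=; [fwd'|bwd'].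
- have [b0|b0] := leP 0 b.
    rewrite (_ : [set y | _] = [set` `[0, a]]).
    { rewrite lebesgue_measure_itv /= lte_fin.
      case: ltP => ?; rewrite -?EFinD; apply: (congr1 EFin); mcase. }
    apply/seteqP; split => y; rewrite /= in_itv /=; [fwd'|bwd'].
  have [a0|a0] := leP 0 a.
    rewrite (_ : [set y | _] = [set` `[b, a]]).
    { rewrite lebesgue_measure_itv /= lte_fin.
      case: ltP => ?; rewrite -?EFinD; apply: (congr1 EFin); mcase. }
    apply/seteqP; split => y; rewrite /= in_itv /=; [fwd'|bwd'].
  rewrite (_ : [set y | _] = [set` `[b, 0[]).
  { rewrite lebesgue_measure_itv /= lte_fin.
    case: ltP => ?; rewrite -?EFinD; apply: (congr1 EFin); mcase. }
  apply/seteqP; split => y; rewrite /= in_itv /=; [fwd'|bwd'].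
Qed.
End S.
Lemma t3 (R : realType) (a b : R) : (Num.max (Num.min a b) 0 - Num.min (Num.max a b) 0) = 2^-1 * (`|a| + `|b| - `|a - b|).
Proof.
have [h4|h4] := leP a b; have [h1|h1] := leP 0 a; have [h2|h2] := leP 0 b; have [h3|h3] := leP 0 (a - b);
  try rewrite (ger0_norm h1); try rewrite (ltr0_norm h1);
  try rewrite (ger0_norm h2); try rewrite (ltr0_norm h2);
  try rewrite (ger0_norm h3); try rewrite (ltr0_norm h3); repeat (case: leP => ?); lra.
Qed.
Lemma t4 (R : realType) (a b : R) : (Num.max (Num.max a b) 0 - Num.min (Num.min a b) 0) = 2^-1 * (`|a| + `|b| + `|a - b|).
Proof.
have [h4|h4] := leP a b; have [h1|h1] := leP 0 a; have [h2|h2] := leP 0 b; have [h3|h3] := leP 0 (a - b);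
  try rewrite (ger0_norm h1); try rewrite (ltr0_norm h1);
  try rewrite (ger0_norm h2); try rewrite (ltr0_norm h2);
  try rewrite (ger0_norm h3); try rewrite (ltr0_norm h3); repeat (case: leP => ?); lra.
Qed.

Theorem proposition2 (d : measure_display) (D : measurableType d) (R : realType)
  (mu : {finite_measure set D -> \bar R}) (f g : D -> R)
  (mf : measurable_fun [set: D] f) (mg : measurable_fun [set: D] g)
  (bf : exists M : R, forall x, `|f x| <= M)
  (bg : exists M : R, forall x, `|g x| <= M) :
  let lambda := (mu \x (@lebesgue_measure R))%E in
  let kcap := lambda (region f `&` region g) in
  let kcup := lambda (region f `|` region g) in
  let Nf := L1norm mu f in
  let Ng := L1norm mu g in
  let Nfg := L1norm mu (fun x => f x - g x) in
  let Imin_pos := (\int[mu]_(x in [set x | (0 <= Num.min (f x) (g x))%R])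
                      (Num.min (f x) (g x))%R%:E)%E in
  let Imax_neg := (\int[mu]_(x in [set x | (Num.max (f x) (g x) < 0)%R])
                      (Num.max (f x) (g x))%R%:E)%E in
  let Imax_pos := (\int[mu]_(x in [set x | (0 <= Num.max (f x) (g x))%R])
                      (Num.max (f x) (g x))%R%:E)%E in
  let Imin_neg := (\int[mu]_(x in [set x | (Num.min (f x) (g x) < 0)%R])
                      (Num.min (f x) (g x))%R%:E)%E in
  [/\ kcap = ((2^-1)%:E * (Nf + Ng - Nfg))%E,
      kcap = (Imin_pos - Imax_neg)%E
    & kcup != 0%E ->
      (kcap / kcup)%E = (((2^-1)%:E * (Nf + Ng - Nfg)) / ((2^-1)%:E * (Nf + Ng + Nfg)))%E
      /\ (kcap / kcup)%E = ((Imin_pos - Imax_neg) / (Imax_pos - Imin_neg))%E].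
Proof.
move=> lambda kcap kcup Nf Ng Nfg Imin_pos Imax_neg Imax_pos Imin_neg.
case: bf => Mf hMf; case: bg => Mg hMg.
have Hcap : kcap = (\int[mu]_x (Num.max (Num.min (f x) (g x)) 0 - Num.min (Num.max (f x) (g x)) 0)%:E)%E.
  rewrite /kcap /lambda /product_measure1 /=; apply: eq_integral => x _ /=.
  rewrite -cap_meas; congr (lebesgue_measure _).
  apply/funext => y; rewrite /xsection /= inE /region /=.
  by [].
have Hcup : kcup = (\int[mu]_x (Num.max (Num.max (f x) (g x)) 0 - Num.min (Num.min (f x) (g x)) 0)%:E)%E.
  rewrite /kcup /lambda /product_measure1 /=; apply: eq_integral => x _ /=.
  rewrite -cup_meas; congr (lebesgue_measure _).
  by apply/funext => y; rewrite /xsection /= inE /region /=.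
pose c1 := fun x => Num.max (Num.min (f x) (g x)) 0.
pose c2 := fun x => Num.min (Num.max (f x) (g x)) 0.
pose u1 := fun x => Num.max (Num.max (f x) (g x)) 0.
pose u2 := fun x => Num.min (Num.min (f x) (g x)) 0.
have mc1 : measurable_fun setT c1.
  by apply: measurable_maxr; [apply: measurable_minr|exact: measurable_cst].
have mc2 : measurable_fun setT c2.
  by apply: measurable_minr; [apply: measurable_maxr|exact: measurable_cst].
have mu1 : measurable_fun setT u1.
  by apply: measurable_maxr; [apply: measurable_maxr|exact: measurable_cst].
have mu2 : measurable_fun setT u2.
  by apply: measurable_minr; [apply: measurable_minr|exact: measurable_cst].
have Ic1 : mu.-integrable setT (EFin \o c1).
  by apply: (@bint _ _ _ mu _ (Mf + Mg) mc1) => x; case: (bnd (hMf x) (hMg x)) => *.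
have Ic2 : mu.-integrable setT (EFin \o c2).
  by apply: (@bint _ _ _ mu _ (Mf + Mg) mc2) => x; case: (bnd (hMf x) (hMg x)) => *.
have Iu1 : mu.-integrable setT (EFin \o u1).
  by apply: (@bint _ _ _ mu _ (Mf + Mg) mu1) => x; case: (bnd (hMf x) (hMg x)) => *.
have Iu2 : mu.-integrable setT (EFin \o u2).
  by apply: (@bint _ _ _ mu _ (Mf + Mg) mu2) => x; case: (bnd (hMf x) (hMg x)) => *.
have If : mu.-integrable setT (EFin \o (fun x => `|f x|)).
  by apply: (@bint _ _ _ mu _ Mf (measurableT_comp (@normr_measurable _ _) mf)) => x; rewrite normr_id.
have Ig : mu.-integrable setT (EFin \o (fun x => `|g x|)).
  by apply: (@bint _ _ _ mu _ Mg (measurableT_comp (@normr_measurable _ _) mg)) => x; rewrite normr_id.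
have Ifg : mu.-integrable setT (EFin \o (fun x => `|f x - g x|)).
  apply: (@bint _ _ _ mu _ (Mf + Mg) (measurableT_comp (@normr_measurable _ _) (measurable_funB mf mg))) => x.
  by rewrite normr_id; case: (bnd (hMf x) (hMg x)) => *.
have K1 : kcap = ((2^-1)%:E * (Nf + Ng - Nfg))%E.
  rewrite Hcap /Nf /Ng /Nfg /L1norm.
  under eq_integral do rewrite t3 EFinM EFinB.
  have Ifg' : mu.-integrable setT (EFin \o (fun x => `|f x| + `|g x|)).
    apply: (eq_integrable measurableT _ _ _ (integrableD measurableT If Ig)) => x _.
    by rewrite /= EFinD.
  have Hint : mu.-integrable setT (fun x => ((`|f x| + `|g x|)%:E - (`|f x - g x|)%:E)%E).
    exact: (integrableB measurableT Ifg' Ifg).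
  rewrite (integralZl measurableT Hint); congr (_ * _)%E.
  rewrite (integralB_EFin measurableT Ifg' Ifg); congr (_ - _)%E.
  under eq_integral do rewrite EFinD.
  exact: (integralD measurableT If Ig).
have U1 : kcup = ((2^-1)%:E * (Nf + Ng + Nfg))%E.
  rewrite Hcup /Nf /Ng /Nfg /L1norm.
  under eq_integral do rewrite t4 EFinM.
  have Ifg' : mu.-integrable setT (EFin \o (fun x => `|f x| + `|g x|)).
    apply: (eq_integrable measurableT _ _ _ (integrableD measurableT If Ig)) => x _.
    by rewrite /= EFinD.
  have Hint : mu.-integrable setT (EFin \o (fun x => `|f x| + `|g x| + `|f x - g x|)).
    apply: (eq_integrable measurableT _ _ _ (integrableD measurableT Ifg' Ifg)) => x _.
    by rewrite /= EFinD.
  rewrite (integralZl measurableT Hint); congr (_ * _)%E.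
  transitivity (\int[mu]_x ((`|f x| + `|g x|)%:E + (`|f x - g x|)%:E))%E.
    by apply: eq_integral => x _; rewrite /= EFinD.
  rewrite (integralD measurableT Ifg' Ifg); congr (_ + _)%E.
  transitivity (\int[mu]_x ((`|f x|)%:E + (`|g x|)%:E))%E.
    by apply: eq_integral => x _; rewrite /= EFinD.
  exact: (integralD measurableT If Ig).
have P1 : Imin_pos = (\int[mu]_x (c1 x)%:E)%E.
  rewrite /Imin_pos integral_mkcond; apply: eq_integral => x _; rewrite patchE /c1 c1E.
  case: (boolP (0 <= Num.min (f x) (g x))) => h; first by rewrite mem_set.
  by rewrite memNset //; apply/negP.
have P2 : Imax_neg = (\int[mu]_x (c2 x)%:E)%E.
  rewrite /Imax_neg integral_mkcond; apply: eq_integral => x _; rewrite patchE /c2 c2E.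
  case: (boolP (Num.max (f x) (g x) < 0)) => h; first by rewrite mem_set.
  by rewrite memNset //; apply/negP.
have P3 : Imax_pos = (\int[mu]_x (u1 x)%:E)%E.
  rewrite /Imax_pos integral_mkcond; apply: eq_integral => x _; rewrite patchE /u1 u1E.
  case: (boolP (0 <= Num.max (f x) (g x))) => h; first by rewrite mem_set.
  by rewrite memNset //; apply/negP.
have P4 : Imin_neg = (\int[mu]_x (u2 x)%:E)%E.
  rewrite /Imin_neg integral_mkcond; apply: eq_integral => x _; rewrite patchE /u2 u2E.
  case: (boolP (Num.min (f x) (g x) < 0)) => h; first by rewrite mem_set.
  by rewrite memNset //; apply/negP.
have K2 : kcap = (Imin_pos - Imax_neg)%E.
  rewrite P1 P2 Hcap; under eq_integral do rewrite EFinB.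
  exact: (integralB_EFin measurableT Ic1 Ic2).
have U2 : kcup = (Imax_pos - Imin_neg)%E.
  rewrite P3 P4 Hcup; under eq_integral do rewrite EFinB.
  exact: (integralB_EFin measurableT Iu1 Iu2).
split => //; move=> _; split; [by rewrite K1 U1 | by rewrite K2 U2].
Qed.
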